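(* Let $G$ be a finitely generated nilpotent group with lower central series $G=G_1\ge G_2\ge\cdots\ge G_{k+1}=\{1\}$, and let $\phi\in\operatorname{Aut}(G)$. For each $i$, let $B_i=G_i/G_{i+1}$, let $\theta_i$ be the automorphism of $B_i$ induced by $\phi$, let $\bar\theta_i$ be the automorphism induced by $\theta_i$ on $B_i/\mathrm{Tor}(B_i)\cong\mathbb{Z}^{m_i}$, and let $M_i\in\mathrm{GL}(m_i,\mathbb{Z})$ be the matrix of $\bar\theta_i$ with respect to a fixed basis. If all eigenvalues of $M_1$ have absolute value $1$, then for every $i$ all eigenvalues of $M_i$ have absolute value $1$.
   Context: $G_{i+1}=[G_i,G]$; each $G_i$ is characteristic so $\phi$ restricts to $G_i$ and induces automorphisms of the quotients. $\mathrm{Tor}(B)$ denotes the torsion subgroup of the finitely generated abelian group $B$. *)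

(* Defs.v *)
From HB Require Import structures.
From mathcomp Require Import all_boot all_order all_algebra all_field.
Set Implicit Arguments. Unset Strict Implicit. Unset Printing Implicit Defensive.
Import Order.TTheory GRing.Theory Num.Theory.

Structure grp := Grp {
  gcar :> Type;
  gmul : gcar -> gcar -> gcar;
  gone : gcar;
  ginv : gcar -> gcar;
  gmulA : forall x y z, gmul x (gmul y z) = gmul (gmul x y) z;
  gmul1g : forall x, gmul gone x = x;
  gmulVg : forall x, gmul (ginv x) x = gone }.

Section GroupDefs.
Variable G : grp.
Local Notation "x * y" := (gmul x y).
Local Notation "1" := (gone G).

Definition is_subgroup (H : G -> Prop) :=
  [/\ H 1, forall x y, H x -> H y -> H (x * y) & forall x, H x -> H (ginv x)].

Definition gen (S : G -> Prop) (x : G) : Prop :=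
  forall H, is_subgroup H -> (forall y, S y -> H y) -> H x.

Definition comm (x y : G) : G := ginv x * ginv y * x * y.

(* lcs n = G_{n+1}  (zero-based); lcs 0 = G, lcs (n+1) = [lcs n, G] *)
Fixpoint lcs (n : nat) : G -> Prop :=
  match n with
  | 0 => fun _ => True
  | n'.+1 => gen (fun c => exists x y, lcs n' x /\ c = comm x y)
  end.

(* Paper's indexing: LCS i = G_i, for i >= 1 (G_1 = G). *)
Definition LCS (i : nat) : G -> Prop := lcs i.-1.

Fixpoint gpow (x : G) (n : nat) : G :=
  match n with 0 => 1 | n'.+1 => x * gpow x n' end.

Definition gzpow (x : G) (z : int) : G :=
  match z with Posz n => gpow x n | Negz n => ginv (gpow x n.+1) end.

Definition finitely_generated :=
  exists n (f : 'I_n -> G), forall x, gen (fun y => exists j, y = f j) x.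

Definition nilpotent := exists k, forall x, LCS k.+1 x -> x = 1.

Definition group_hom (phi : G -> G) := forall x y, phi (x * y) = phi x * phi y.

(* preimage in G_i of Tor(B_i), B_i = G_i/G_{i+1} *)
Definition torG (i : nat) (x : G) : Prop :=
  LCS i x /\ exists n, (0 < n)%N /\ LCS i.+1 (gpow x n).

Definition prodz m (g : 'I_m -> G) (a : 'I_m -> int) : G :=
  foldr (fun j acc => gzpow (g j) (a j) * acc) 1 (enum 'I_m).

(* g_0,...,g_{m-1} in G_i whose images form a Z-basis of
   B_i/Tor(B_i) = G_i / torG i *)
Definition tf_basis (i m : nat) (g : 'I_m -> G) : Prop :=
  [/\ forall j, LCS i (g j),
      forall x, LCS i x -> exists a, torG i (x * ginv (prodz g a))
    & forall a b, torG i (prodz g a * ginv (prodz g b)) -> forall j, a j = b j].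

(* M is the matrix of the automorphism induced by phi on B_i/Tor(B_i)
   w.r.t. the basis g : row j of M = coordinates of the image of g_j *)
Definition induced_matrix (phi : G -> G) (i m : nat) (g : 'I_m -> G)
    (M : 'M[int]_m) : Prop :=
  forall j, torG i (phi (g j) * ginv (prodz g (fun k => M j k))).

End GroupDefs.

Definition cmx m (M : 'M[int]_m) : 'M[algC]_m := map_mx (fun z : int => (z%:~R)%R) M.

(* Main.v *)
Require Import Defs.
From mathcomp Require Import all_boot all_order all_algebra all_field.
From mathcomp Require Import zify ring.
From Stdlib Require Import ClassicalEpsilon Classical FunctionalExtensionality.
Import Order.TTheory GRing.Theory Num.Theory.
Set Implicit Arguments. Unset Strict Implicit. Unset Printing Implicit Defensive.

(* Proof strategy: polynomial growth.
   - Level-1 eigenvalues of modulus <= 1 give polynomially bounded powers of M1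
     (Cayley-Hamilton + linear recurrences).
   - Multilinearity of iterated commutators modulo G_{i+1} (using [G_k, G_2] <= G_{k+2},
     proved via Hall-Witt) transfers polynomial growth to level i.
   - Polynomial growth of M^n forces eigenvalues |a| <= 1; applying the same to phi^-1
     gives |a^-1| <= 1. *)

Section GB.
Variable G : grp.
Local Notation "x ** y" := (gmul x y) (at level 40, left associativity).
Local Notation one := (gone G).
Implicit Types x y z : G.

Lemma gmulKg x y : ginv x ** (x ** y) = y.
Proof. by rewrite gmulA gmulVg gmul1g. Qed.

Lemma gmulgV x : x ** ginv x = one.
Proof.
have ee : (x ** ginv x) ** (x ** ginv x) = x ** ginv x.
  by rewrite -gmulA (gmulA (ginv x)) gmulVg gmul1g.
by rewrite -[LHS]gmul1g -(gmulVg (x ** ginv x)) -gmulA ee.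
Qed.

Lemma gmulg1 x : x ** one = x.
Proof. by rewrite -(gmulVg x) gmulA gmulgV gmul1g. Qed.

Lemma gmulKVg x y : x ** (ginv x ** y) = y.
Proof. by rewrite gmulA gmulgV gmul1g. Qed.

Lemma ginv_uniq x y : x ** y = one -> x = ginv y.
Proof. by move=> h; rewrite -[x]gmulg1 -(gmulgV y) gmulA h gmul1g. Qed.

Lemma ginvK x : ginv (ginv x) = x.
Proof. by symmetry; apply: ginv_uniq; apply: gmulgV. Qed.

Lemma ginvM x y : ginv (x ** y) = ginv y ** ginv x.
Proof.
symmetry; apply: ginv_uniq.
by rewrite -gmulA (gmulA (ginv x)) gmulVg gmul1g gmulVg.
Qed.

Lemma ginv1 : ginv one = one.
Proof. by symmetry; apply: ginv_uniq; rewrite gmul1g. Qed.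

Lemma gmulI x y z : x ** y = x ** z -> y = z.
Proof. by move=> h; rewrite -(gmulKg x y) h gmulKg. Qed.

End GB.

Ltac gnorm := rewrite ?ginvM ?ginvK ?ginv1; rewrite -?gmulA;
  repeat (rewrite ?gmulKg ?gmulKVg ?gmulVg ?gmulgV ?gmul1g ?gmulg1 ?ginv1); try done.

Section GL.
Variable G : grp.
Local Notation "x ** y" := (gmul x y) (at level 40, left associativity).
Local Notation one := (gone G).
Implicit Types x y z w : G.

Definition conjg x g := ginv g ** x ** g.
Definition normal (N : G -> Prop) := forall x g, N x -> N (conjg x g).
Definition eqm (N : G -> Prop) x y := N (x ** ginv y).

Lemma hall_witt x y z :
  conjg (comm (comm x (ginv y)) z) y ** conjg (comm (comm y (ginv z)) x) z
  ** conjg (comm (comm z (ginv x)) y) x = one.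
Proof. rewrite /conjg /comm; gnorm. Qed.

Lemma sg1 (N : G -> Prop) (NS : is_subgroup N) : N one. Proof. by case: NS. Qed.
Lemma sgM (N : G -> Prop) (NS : is_subgroup N) x y : N x -> N y -> N (x ** y). Proof. by case: NS => _ h _; apply: h. Qed.
Lemma sgV (N : G -> Prop) (NS : is_subgroup N) x : N x -> N (ginv x). Proof. by case: NS => _ _ h; apply: h. Qed.
Lemma sgVV (N : G -> Prop) (NS : is_subgroup N) x : N (ginv x) -> N x. Proof. by move/(sgV NS); rewrite ginvK. Qed.
Lemma sgMl (N : G -> Prop) (NS : is_subgroup N) x y : N x -> N (x ** y) -> N y.
Proof. by move=> hx hxy; have := sgM NS (sgV NS hx) hxy; rewrite gmulKg. Qed.
Lemma sgMr (N : G -> Prop) (NS : is_subgroup N) x y : N y -> N (x ** y) -> N x.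
Proof. by move=> hy hxy; have := sgM NS hxy (sgV NS hy); rewrite -gmulA gmulgV gmulg1. Qed.

Lemma sgconj (N : G -> Prop) (NS : is_subgroup N) (NN : normal N) x g : N x -> N (conjg x g). Proof. exact: NN. Qed.
Lemma sgconjV (N : G -> Prop) (NS : is_subgroup N) (NN : normal N) x g : N (conjg x g) -> N x.
Proof. by move=> h; have := NN _ (ginv g) h; rewrite /conjg; gnorm. Qed.

Lemma eqm_refl (N : G -> Prop) (NS : is_subgroup N) (NN : normal N) x : eqm N x x. Proof. by rewrite /eqm gmulgV; apply: sg1 NS. Qed.
Lemma eqm_sym (N : G -> Prop) (NS : is_subgroup N) (NN : normal N) x y : eqm N x y -> eqm N y x.
Proof. by rewrite /eqm => /(sgV NS); rewrite ginvM ginvK. Qed.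
Lemma eqm_trans (N : G -> Prop) (NS : is_subgroup N) (NN : normal N) x y z : eqm N x y -> eqm N y z -> eqm N x z.
Proof. by rewrite /eqm => h1 h2; have := sgM NS h1 h2; rewrite -gmulA gmulKg. Qed.
Lemma eqm_mul (N : G -> Prop) (NS : is_subgroup N) (NN : normal N) x x' y y' : eqm N x x' -> eqm N y y' -> eqm N (x ** y) (x' ** y').
Proof.
rewrite /eqm => h1 h2.
have -> : x ** y ** ginv (x' ** y') = conjg (y ** ginv y') (ginv x) ** (x ** ginv x').
  by rewrite /conjg; gnorm.
by apply: (sgM NS) => //; apply: NN.
Qed.
Lemma eqm_inv (N : G -> Prop) (NS : is_subgroup N) (NN : normal N) x x' : eqm N x x' -> eqm N (ginv x) (ginv x').
Proof.
move=> /(eqm_sym NS NN); rewrite /eqm => h.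
have -> : ginv x ** ginv (ginv x') = conjg (x' ** ginv x) x by rewrite /conjg; gnorm.
exact: NN.
Qed.
Lemma eqm_in (N : G -> Prop) (NS : is_subgroup N) (NN : normal N) x y : eqm N x y -> N y -> N x.
Proof. by rewrite /eqm => h hy; apply: (sgMr NS _ h); apply: (sgV NS). Qed.
Lemma eqm_in1 (N : G -> Prop) (NS : is_subgroup N) (NN : normal N) x : eqm N x one <-> N x.
Proof. by rewrite /eqm ginv1 gmulg1. Qed.
Lemma eqm_drop (N : G -> Prop) (NS : is_subgroup N) (NN : normal N) a d b : N d -> eqm N (a ** d ** b) (a ** b).
Proof.
move=> hd; rewrite /eqm.
have -> : a ** d ** b ** ginv (a ** b) = conjg d (ginv a) by rewrite /conjg; gnorm.
exact: NN.
Qed.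
Lemma eqm_dropr (N : G -> Prop) (NS : is_subgroup N) (NN : normal N) a d : N d -> eqm N (a ** d) a.
Proof. by move=> hd; have := eqm_drop NS NN a one hd; rewrite !gmulg1. Qed.


Lemma gen_sub (S : G -> Prop) : is_subgroup (gen S).
Proof.
split.
- by move=> H [h1 _ _] _.
- by move=> x y hx hy H HS hS; case: (HS) => _ hM _; apply: hM; [apply: hx | apply: hy].
- by move=> x hx H HS hS; case: (HS) => _ _ hV; apply: hV; apply: hx.
Qed.
Lemma gen_in (S : G -> Prop) y : S y -> gen S y.
Proof. by move=> hy H _ h; apply: h. Qed.

Lemma conjgK x g : conjg (conjg x (ginv g)) g = x. Proof. rewrite /conjg; gnorm. Qed.
Lemma comm_inv x y : ginv (comm x y) = comm y x. Proof. rewrite /comm; gnorm. Qed.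
Lemma conjM x y g : conjg (x ** y) g = conjg x g ** conjg y g. Proof. rewrite /conjg; gnorm. Qed.
Lemma conjV x g : conjg (ginv x) g = ginv (conjg x g). Proof. rewrite /conjg; gnorm. Qed.
Lemma conj1 g : conjg one g = one. Proof. rewrite /conjg; gnorm. Qed.
Lemma conj_comm x y g : conjg (comm x y) g = comm (conjg x g) (conjg y g).
Proof. rewrite /conjg /comm; gnorm. Qed.
Lemma comm_as_conj x y : comm x y = ginv x ** conjg x y. Proof. rewrite /conjg /comm; gnorm. Qed.

Local Notation L := (@lcs G).

Lemma lcsS k : L k.+1 = gen (fun c => exists x y, L k x /\ c = comm x y).
Proof. by []. Qed.

Lemma lcs_comm k x y : L k x -> L k.+1 (comm x y).
Proof. by move=> h H _ hS; apply: hS; exists x, y. Qed.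

Lemma lcs_sub_norm k : is_subgroup (L k) /\ normal (L k).
Proof.
elim: k => [|k [IHs IHn]]; first by split; [split | ].
split; first exact: gen_sub.
move=> x g hx; apply: (hx (fun v => L k.+1 (conjg v g))); last first.
  by move=> c [a [b [ha ->]]]; rewrite conj_comm; apply: lcs_comm; apply: IHn.
split.
- by rewrite conj1; case: (gen_sub (fun c => exists x y, L k x /\ c = comm x y)).
- by move=> a b /= ha hb; rewrite conjM; apply: (sgM (gen_sub _) ha hb).
- by move=> a /= ha; rewrite conjV; apply: (sgV (gen_sub _) ha).
Qed.

Lemma lcs_sub k : is_subgroup (L k). Proof. by case: (lcs_sub_norm k). Qed.
Lemma lcs_norm k : normal (L k). Proof. by case: (lcs_sub_norm k). Qed.

Lemma lcs1 k : L k one. Proof. exact: (sg1 (@lcs_sub k)). Qed.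
Lemma lcsM k x y : L k x -> L k y -> L k (x ** y). Proof. exact: (sgM (@lcs_sub k)). Qed.
Lemma lcsV k x : L k x -> L k (ginv x). Proof. exact: (sgV (@lcs_sub k)). Qed.
Lemma lcsJ k x g : L k x -> L k (conjg x g). Proof. by move=> h; apply: (@lcs_norm k x g h). Qed.

Lemma lcs_commr k x y : L k y -> L k.+1 (comm x y).
Proof. by move=> h; rewrite -comm_inv; apply: lcsV; apply: lcs_comm. Qed.

Lemma lcs_decr k x : L k.+1 x -> L k x.
Proof.
move=> h; apply: (h (L k)); first exact: lcs_sub.
move=> c [a [b [ha ->]]]; rewrite comm_as_conj.
by apply: lcsM; [apply: lcsV | apply: lcsJ].
Qed.

Lemma lcs_le k l x : (k <= l)%N -> L l x -> L k x.
Proof.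
move=> /subnK <-; elim: (l - k)%N => [|d IH] //= h.
by apply: IH; apply: lcs_decr.
Qed.

Lemma lcs0 x : L 0 x. Proof. by []. Qed.

Lemma comm_mull w w' z : comm (w ** w') z = conjg (comm w z) w' ** comm w' z.
Proof. rewrite /conjg /comm; gnorm. Qed.
Lemma conj_as_comm c w : conjg c w = c ** comm c w.
Proof. rewrite /conjg /comm; gnorm. Qed.
Lemma comm_mulr w z z' : comm w (z ** z') = comm w z' ** conjg (comm w z) z'.
Proof. rewrite /conjg /comm; gnorm. Qed.

Lemma eqm_commute k x y : L k x -> eqm (L k.+1) (x ** y) (y ** x).
Proof.
move=> hx; rewrite /eqm.
have -> : x ** y ** ginv (y ** x) = comm (ginv x) (ginv y) by rewrite /comm; gnorm.
by apply: lcs_comm; apply: lcsV.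
Qed.

Lemma comm_bil_l k w w' z : L k w -> L k w' ->
  eqm (L k.+2) (comm (w ** w') z) (comm w z ** comm w' z).
Proof.
move=> hw hw'; rewrite comm_mull conj_as_comm.
apply: (eqm_drop (@lcs_sub k.+2) (@lcs_norm k.+2)).
by apply: lcs_comm; apply: lcs_comm.
Qed.

Lemma comm_bil_r k w z z' : L k w ->
  eqm (L k.+2) (comm w (z ** z')) (comm w z ** comm w z').
Proof.
move=> hw; rewrite comm_mulr conj_as_comm gmulA.
have S := @lcs_sub k.+2; have NN := @lcs_norm k.+2.
apply: (eqm_trans S NN (_ : eqm _ _ (comm w z' ** comm w z))).
  by apply: (eqm_dropr S NN); apply: lcs_comm; apply: lcs_comm.
by apply: eqm_commute; apply: lcs_comm.
Qed.

Lemma lcs_comm_G2 k w u : L k w -> L 1 u -> L k.+2 (comm w u).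
Proof.
move=> hw hu.
pose S u := forall w, L k w -> L k.+2 (comm w u).
suff : S u by apply.
have Ssub : is_subgroup S.
  split.
  - move=> w0 _; have -> : comm w0 one = one by rewrite /comm; gnorm.
    exact: lcs1.
  - move=> a b ha hb w0 hw0; rewrite comm_mulr; apply: lcsM; first exact: hb.
    by apply: lcsJ; apply: ha.
  - move=> a ha w0 hw0.
    have -> : comm w0 (ginv a) = conjg (ginv (comm w0 a)) (ginv a) by rewrite /conjg /comm; gnorm.
    by apply: lcsJ; apply: lcsV; apply: ha.
apply: (hu S) => // c [a [b [_ ->]]] w0 hw0.
rewrite -comm_inv; apply: lcsV.
have hwi := hall_witt a (ginv b) w0; rewrite ginvK in hwi.
set X := conjg (comm (comm a b) w0) (ginv b) in hwi.
have h2 : L k.+2 (conjg (comm (comm (ginv b) (ginv w0)) a) w0).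
  apply: lcsJ; apply: lcs_comm; rewrite -comm_inv; apply: lcsV.
  by apply: lcs_comm; apply: lcsV.
have h3 : L k.+2 (conjg (comm (comm w0 (ginv a)) (ginv b)) a).
  by apply: lcsJ; apply: lcs_comm; apply: lcs_comm.
have hX : L k.+2 X.
  have : L k.+2 (X ** conjg (comm (comm (ginv b) (ginv w0)) a) w0
        ** conjg (comm (comm w0 (ginv a)) (ginv b)) a) by rewrite hwi; apply: lcs1.
  by move=> h; apply: (sgMr (@lcs_sub k.+2) h2); apply: (sgMr (@lcs_sub k.+2) h3).
have hc : conjg X b = comm (comm a b) w0 by rewrite /X conjgK.
by rewrite -hc; exact: lcsJ.
Qed.

Section Hom.
Variable f : G -> G.
Hypothesis fh : group_hom f.
Lemma hom1 : f one = one.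
Proof. by apply: (@gmulI _ (f one)); rewrite -fh !gmulg1. Qed.
Lemma homV x : f (ginv x) = ginv (f x).
Proof. by apply: ginv_uniq; rewrite -fh gmulVg hom1. Qed.
Lemma hom_comm x y : f (comm x y) = comm (f x) (f y).
Proof. by rewrite /comm !fh !homV. Qed.
Lemma lcs_hom k x : L k x -> L k (f x).
Proof.
elim: k x => [|k IH] x //= hx.
apply: (hx (fun v => L k.+1 (f v))); last first.
  by move=> c [a [b [ha ->]]]; rewrite hom_comm; apply: lcs_comm; apply: IH.
split.
- by rewrite hom1; apply: lcs1.
- by move=> a b ha hb; rewrite fh; apply: lcsM.
- by move=> a ha; rewrite homV; apply: lcsV.
Qed.
End Hom.

End GL.

Section GC.
Variable G : grp.
Local Notation "x ** y" := (gmul x y) (at level 40, left associativity).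
Local Notation one := (gone G).
Local Notation L := (@lcs G).
Implicit Types x y z w : G.

Definition outer (r : seq G) w := foldl (@comm G) w r.

Lemma outer_cons z r w : outer (z :: r) w = outer r (comm w z). Proof. by []. Qed.

Lemma outer_lcs r k w : L k w -> L (k + size r) (outer r w).
Proof.
elim: r k w => [|z r IH] k w hw /=; first by rewrite addn0.
by rewrite -addSnnS; apply: IH; apply: lcs_comm.
Qed.

Lemma outer_lcs1 r k w : L k.+1 w -> L (k + size r).+1 (outer r w).
Proof. by move=> h; rewrite -addSn; apply: outer_lcs. Qed.

Lemma eqm_dropl (N : G -> Prop) (NS : is_subgroup N) (NN : normal N) d b :
  N d -> eqm N (d ** b) b.
Proof. by move=> hd; have := eqm_drop NS NN one b hd; rewrite !gmul1g. Qed.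

Lemma outer1 r : outer r one = one.
Proof.
elim: r => [|z r IH] //; rewrite outer_cons.
by have -> : comm one z = one by rewrite /comm; gnorm.
Qed.

Definition O3 r := forall k w w', L k w -> L k w' ->
  eqm (L (k + size r).+1) (outer r (w ** w')) (outer r w ** outer r w').

Lemma O3_O4 r : O3 r -> forall k w w', L k w -> L k w' -> eqm (L k.+1) w w' ->
  eqm (L (k + size r).+1) (outer r w) (outer r w').
Proof.
move=> h3 k w w' hw hw' he.
have S := @lcs_sub G (k + size r).+1; have NN := @lcs_norm G (k + size r).+1.
have -> : w = (w ** ginv w') ** w' by gnorm.
apply: (eqm_trans S NN (h3 k _ _ (lcs_decr he) hw')).
by apply: (eqm_dropl S NN); apply: outer_lcs1.
Qed.

Lemma outerO3 r : O3 r.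
Proof.
elim: r => [|z r IH] k w w' hw hw'.
  by rewrite addn0; exact: (eqm_refl (@lcs_sub G k.+1) (@lcs_norm G k.+1)).
rewrite !outer_cons [size _]/= -addSnnS.
have S := @lcs_sub G (k.+1 + size r).+1; have NN := @lcs_norm G (k.+1 + size r).+1.
apply: (eqm_trans S NN (_ : eqm _ _ (outer r (comm w z ** comm w' z)))).
  apply: (O3_O4 IH).
  - by apply: lcs_comm; apply: lcsM.
  - by apply: lcsM; apply: lcs_comm.
  - exact: comm_bil_l.
by apply: IH; apply: lcs_comm.
Qed.

Lemma outerO4 r k w w' : L k w -> L k w' -> eqm (L k.+1) w w' ->
  eqm (L (k + size r).+1) (outer r w) (outer r w').
Proof. by move=> hw hw' he; apply: (@O3_O4 r (@outerO3 r) k w w' hw hw' he). Qed.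
Lemma outerO3' r k w w' : L k w -> L k w' ->
  eqm (L (k + size r).+1) (outer r (w ** w')) (outer r w ** outer r w').
Proof. exact: (@outerO3 r k w w'). Qed.

Lemma gpowD x n m : gpow x (n + m) = gpow x n ** gpow x m.
Proof. by elim: n => [|n IH] /=; [rewrite gmul1g | rewrite IH gmulA]. Qed.
Lemma gpowSr x n : gpow x n.+1 = gpow x n ** x.
Proof. by rewrite -addn1 gpowD /= gmulg1. Qed.
Lemma gpowM x n m : gpow x (n * m) = gpow (gpow x n) m.
Proof. by elim: m => [|m IH]; [rewrite muln0 | rewrite mulnS gpowD IH]. Qed.
Lemma gpow_comm x n m : gpow x n ** gpow x m = gpow x m ** gpow x n.
Proof. by rewrite -!gpowD addnC. Qed.
Lemma gpowV x n : ginv (gpow x n) = gpow (ginv x) n.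
Proof.
elim: n => [|n IH] /=; first by rewrite ginv1.
by rewrite ginvM IH -gpowSr.
Qed.
Lemma gpow_hom f (fh : group_hom f) x n : f (gpow x n) = gpow (f x) n.
Proof. by elim: n => [|n IH] /=; [rewrite hom1 | rewrite fh IH]. Qed.
Lemma gpow_conj x g n : conjg (gpow x n) g = gpow (conjg x g) n.
Proof. by elim: n => [|n IH] /=; [rewrite conj1 | rewrite conjM IH]. Qed.
Lemma gpow_lcs k x n : L k x -> L k (gpow x n).
Proof. by move=> h; elim: n => [|n IH] /=; [apply: lcs1 | apply: lcsM]. Qed.

Lemma gpow_mulmod k x y n : L k x -> L k y ->
  eqm (L k.+1) (gpow (x ** y) n) (gpow x n ** gpow y n).
Proof.
move=> hx hy.
have S := @lcs_sub G k.+1; have NN := @lcs_norm G k.+1.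
have R := eqm_refl S NN.
elim: n => [|n IH] /=; first by rewrite gmulg1; apply: R.
apply: (eqm_trans S NN (eqm_mul S NN (R (x ** y)) IH)).
have -> : x ** y ** (gpow x n ** gpow y n) = x ** (y ** gpow x n) ** gpow y n by gnorm.
have -> : x ** gpow x n ** (y ** gpow y n) = x ** (gpow x n ** y) ** gpow y n by gnorm.
apply: (eqm_mul S NN _ (R _)); apply: (eqm_mul S NN (R _)).
by apply: (eqm_sym S NN); apply: eqm_commute; apply: gpow_lcs.
Qed.

Lemma torG_E K x : torG K.+1 x <-> L K x /\ exists n, (0 < n)%N /\ L K.+1 (gpow x n).
Proof. by []. Qed.

Lemma torG_sub K : is_subgroup (@torG G K.+1).
Proof.
split.
- split; first exact: lcs1.
  by exists 1%N; split => //=; rewrite gmulg1; apply: lcs1.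
- move=> x y [hx [n [n0 hn]]] [hy [m [m0 hm]]]; split; first exact: lcsM.
  exists (n * m)%N; split; first by rewrite muln_gt0 n0.
  apply: (eqm_in (@lcs_sub _ _) (@lcs_norm _ _) (gpow_mulmod _ hx hy)).
  apply: lcsM; first by rewrite gpowM; apply: gpow_lcs.
  by rewrite mulnC gpowM; apply: gpow_lcs.
- move=> x [hx [n [n0 hn]]]; split; first exact: lcsV.
  by exists n; split => //; rewrite -gpowV; apply: lcsV.
Qed.

Lemma torG_norm K : normal (@torG G K.+1).
Proof.
move=> x g [hx [n [n0 hn]]]; split; first exact: lcsJ.
by exists n; split => //; rewrite -gpow_conj; apply: lcsJ.
Qed.

Lemma torG_lcs K x : L K.+1 x -> torG K.+1 x.
Proof.
move=> h; split; first exact: lcs_decr.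
by exists 1%N; split => //=; rewrite gmulg1.
Qed.

Lemma torG_hom f (fh : group_hom f) K x : torG K.+1 x -> torG K.+1 (f x).
Proof.
move=> [hx [n [n0 hn]]]; split; first exact: lcs_hom.
by exists n; split => //; rewrite -gpow_hom //; apply: lcs_hom.
Qed.

Lemma torG_in K x : torG K.+1 x -> L K x. Proof. by case. Qed.

Lemma gzpow_subn x n m : gzpow x (n%:Z - m%:Z)%R = gpow x n ** ginv (gpow x m).
Proof.
elim: m n => [|m IH] n.
  by rewrite GRing.subr0 /= ginv1 gmulg1.
case: n => [|n].
  have -> : (0%:Z - m.+1%:Z)%R = Negz m by rewrite NegzE; lia.
  by rewrite /= gmul1g.
have -> : (n.+1%:Z - m.+1%:Z)%R = (n%:Z - m%:Z)%R by lia.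
rewrite IH gpowSr (gpowSr x m); gnorm.
Qed.

Lemma gzpow_rep x (a : int) : exists p q : nat, a = (p%:Z - q%:Z)%R.
Proof. by case: a => n; [exists n, 0%N | exists 0%N, n.+1]; lia. Qed.

Lemma gzpowD x (a b : int) : gzpow x (a + b)%R = gzpow x a ** gzpow x b.
Proof.
have [p1 [q1 ->]] := gzpow_rep x a; have [p2 [q2 ->]] := gzpow_rep x b.
have -> : (p1%:Z - q1%:Z + (p2%:Z - q2%:Z))%R = ((p1 + p2)%N%:Z - (q2 + q1)%N%:Z)%R by lia.
rewrite !gzpow_subn !gpowD.
have h : ginv (gpow x q1) ** gpow x p2 = gpow x p2 ** ginv (gpow x q1).
  apply: (@gmulI _ (gpow x q1)); rewrite gmulA gmulgV gmul1g gmulA gpow_comm; gnorm.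
rewrite ginvM [RHS]gmulA -[gpow x p1 ** _ ** gpow x p2]gmulA h; gnorm.
Qed.

Lemma gzpow_lcs k x a : L k x -> L k (gzpow x a).
Proof. by move=> h; case: a => n; [exact: (gpow_lcs n h) | exact: (lcsV (gpow_lcs n.+1 h))]. Qed.

Lemma gzpow_hom f (fh : group_hom f) x a : f (gzpow x a) = gzpow (f x) a.
Proof. by case: a => n; rewrite /gzpow ?(homV fh) (gpow_hom fh). Qed.

End GC.


Local Open Scope ring_scope.

Section GD.
Variable G : grp.
Local Notation "x ** y" := (gmul x y) (at level 40, left associativity).
Local Notation one := (gone G).
Local Notation L := (@lcs G).
Implicit Types x y z w : G.

Lemma sg_gpow (H : G -> Prop) (HS : is_subgroup H) x n : H x -> H (gpow x n).
Proof. by move=> h; elim: n => [|n IH] /=; [exact: (sg1 HS) | exact: (sgM HS)]. Qed.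
Lemma sg_gzpow (H : G -> Prop) (HS : is_subgroup H) x a : H x -> H (gzpow x a).
Proof. by move=> h; case: a => n; [exact: (sg_gpow HS n h) | exact: (sgV HS (sg_gpow HS n.+1 h))]. Qed.

Definition pfold m (h : 'I_m -> G) (a : 'I_m -> int) (s : seq 'I_m) :=
  foldr (fun j acc => gzpow (h j) (a j) ** acc) one s.
Lemma prodzE m (h : 'I_m -> G) a : prodz h a = pfold h a (enum 'I_m). Proof. by []. Qed.

Lemma sg_pfold (H : G -> Prop) (HS : is_subgroup H) m (h : 'I_m -> G) a s :
  (forall j, H (h j)) -> H (pfold h a s).
Proof.
move=> hh; elim: s => [|j s IH] /=; first exact: (sg1 HS).
by apply: (sgM HS) => //; apply: sg_gzpow.
Qed.
Lemma sg_prodz (H : G -> Prop) (HS : is_subgroup H) m (h : 'I_m -> G) a :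
  (forall j, H (h j)) -> H (prodz h a).
Proof. exact: sg_pfold. Qed.

Lemma pfold_hom f (fh : group_hom f) m (h : 'I_m -> G) a s :
  f (pfold h a s) = pfold (fun j => f (h j)) a s.
Proof. by elim: s => [|j s IH] /=; rewrite ?hom1 // fh IH (gzpow_hom fh). Qed.
Lemma prodz_hom f (fh : group_hom f) m (h : 'I_m -> G) a :
  f (prodz h a) = prodz (fun j => f (h j)) a.
Proof. exact: pfold_hom. Qed.

Definition additive_on (H : G -> Prop) (V : zmodType) (S : G -> V) :=
  is_subgroup H /\ forall x y, H x -> H y -> S (x ** y) = S x + S y.

Section Additive.
Variables (V : zmodType) (H : G -> Prop) (S : G -> V).

Lemma add1 : additive_on H S -> S one = 0.
Proof.
move=> [HS SD]; have h1 : H one by case: HS.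
have := SD _ _ h1 h1; rewrite gmulg1 => e.
by apply: (@addrI _ (S one)); rewrite addr0 -e.
Qed.

Lemma addV : additive_on H S -> forall x, H x -> S (ginv x) = - S x.
Proof.
move=> hA x hx; have [HS SD] := hA; have hv : H (ginv x) by case: HS => _ _; apply.
apply/eqP; rewrite -addr_eq0; apply/eqP.
by rewrite -SD // gmulVg (add1 hA).
Qed.

Lemma addpow : additive_on H S -> forall x n, H x -> S (gpow x n) = S x *+ n.
Proof.
move=> hA x n hx; have [HS SD] := hA; elim: n => [|n IH] /=; first by rewrite (add1 hA).
by rewrite SD ?IH ?mulrS //; exact: sg_gpow.
Qed.

Lemma addzpow : additive_on H S -> forall x a, H x -> S (gzpow x a) = S x *~ a.
Proof.
move=> hA x a hx; have HS := hA.1; case: a => n; rewrite /gzpow.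
  by rewrite (addpow hA n hx).
have hp := sg_gpow HS n.+1 hx.
by rewrite (addV hA hp) (addpow hA n.+1 hx) NegzE mulrNz.
Qed.

Lemma addpfold : additive_on H S -> forall m (h : 'I_m -> G) a s,
  (forall j, H (h j)) -> S (pfold h a s) = \sum_(j <- s) S (h j) *~ a j.
Proof.
move=> hA m h a s hh; have [HS SD] := hA.
elim: s => [|j s IH] /=; first by rewrite big_nil (add1 hA).
rewrite big_cons SD ?IH ?(addzpow hA) //; first exact: sg_gzpow.
exact: sg_pfold.
Qed.

Lemma addprodz : additive_on H S -> forall m (h : 'I_m -> G) a,
  (forall j, H (h j)) -> S (prodz h a) = \sum_j S (h j) *~ a j.
Proof. by move=> hA m h a hh; rewrite prodzE (addpfold hA) // big_enum. Qed.
End Additive.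


Lemma iter_hom (f : G -> G) (fh : group_hom f) n : group_hom (iter n f).
Proof. by elim: n => [|n IH] x y //=; rewrite IH fh. Qed.
Lemma iter_lcs (f : G -> G) (fh : group_hom f) k n x : L k x -> L k (iter n f x).
Proof. by move=> h; elim: n => [|n IH] //=; apply: lcs_hom. Qed.

Section Coord.
Variables (K m : nat) (g : 'I_m -> G).
Hypothesis hb : tf_basis K.+1 g.

Lemma coord_ex x : exists a : 'I_m -> int, L K x -> torG K.+1 (x ** ginv (prodz g a)).
Proof.
case: (classic (L K x)) => h.
  by case: hb => _ h2 _; have [a ha] := h2 x h; exists a.
by exists (fun _ => 0) => /h.
Qed.

Definition coordf x := proj1_sig (constructive_indefinite_description _ (coord_ex x)).
Definition coord x : 'rV[int]_m := \row_k coordf x k.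
Definition Pz (v : 'rV[int]_m) := prodz g (fun k => v 0 k).

Lemma P_row (a : 'I_m -> int) : Pz (\row_k a k) = prodz g a.
Proof. by rewrite /Pz; congr prodz; apply: functional_extensionality => k; rewrite mxE. Qed.

Lemma coordP x : L K x -> torG K.+1 (x ** ginv (Pz (coord x))).
Proof. by move=> h; rewrite /coord P_row; exact: (proj2_sig (constructive_indefinite_description _ (coord_ex x)) h). Qed.

Lemma g_lcs j : L K (g j). Proof. by case: hb => h _ _; exact: h. Qed.
Lemma P_lcs v : L K (Pz v). Proof. exact: (sg_prodz (@lcs_sub G K) _ g_lcs). Qed.

Lemma coord_uniq x v : L K x -> torG K.+1 (x ** ginv (Pz v)) -> coord x = v.
Proof.
move=> hx hv; have h1 := coordP hx.
have TS := @torG_sub G K.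
have : torG K.+1 (Pz (coord x) ** ginv (Pz v)).
  have := sgM TS (sgV TS h1) hv.
  by have -> : ginv (x ** ginv (Pz (coord x))) ** (x ** ginv (Pz v)) = Pz (coord x) ** ginv (Pz v) by gnorm.
case: hb => _ _ h3 /h3 e; apply/rowP => k; exact: (e k).
Qed.

Lemma pfold_add (a b : 'I_m -> int) s :
  eqm (L K.+1) (pfold g a s ** pfold g b s) (pfold g (fun k => a k + b k) s).
Proof.
have S := @lcs_sub G K.+1; have NN := @lcs_norm G K.+1; have R := eqm_refl S NN.
elim: s => [|j s IH] /=; first by rewrite gmulg1; apply: R.
rewrite (gzpowD (g j) (a j) (b j)).
have -> : gzpow (g j) (a j) ** pfold g a s ** (gzpow (g j) (b j) ** pfold g b s) =
  gzpow (g j) (a j) ** (pfold g a s ** gzpow (g j) (b j)) ** pfold g b s by gnorm.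
apply: (eqm_trans S NN (_ : eqm _ _ (gzpow (g j) (a j) ** (gzpow (g j) (b j) ** pfold g a s) ** pfold g b s))).
  apply: (eqm_mul S NN _ (R _)); apply: (eqm_mul S NN (R _)).
  by apply: eqm_commute; apply: (sg_pfold (@lcs_sub G K)); apply: g_lcs.
have -> : gzpow (g j) (a j) ** (gzpow (g j) (b j) ** pfold g a s) ** pfold g b s =
  gzpow (g j) (a j) ** gzpow (g j) (b j) ** (pfold g a s ** pfold g b s) by gnorm.
by apply: (eqm_mul S NN (R _)).
Qed.

Lemma P_add u v : eqm (L K.+1) (Pz u ** Pz v) (Pz (u + v)).
Proof.
rewrite /Pz !prodzE.
have -> : (fun k => (u + v) 0 k) = (fun k => u 0 k + v 0 k).
  by apply: functional_extensionality => k; rewrite mxE.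
exact: pfold_add.
Qed.

Lemma coordD x y : L K x -> L K y -> coord (x ** y) = coord x + coord y.
Proof.
move=> hx hy; apply: coord_uniq; first exact: lcsM.
have TS := @torG_sub G K; have TN := @torG_norm G K.
apply: (eqm_trans TS TN (eqm_mul TS TN (coordP hx) (coordP hy))).
exact: torG_lcs (P_add _ _).
Qed.

Lemma coord_add : additive_on (L K) coord.
Proof. by split; [exact: lcs_sub | exact: coordD]. Qed.

Lemma pfold0 s : pfold g (fun _ => 0) s = one.
Proof. by elim: s => [|j s IH] //=; rewrite IH gmul1g. Qed.

Lemma P0 : Pz 0 = one.
Proof.
rewrite /Pz prodzE.
have -> : (fun k => (0 : 'rV[int]_m) 0 k) = (fun _ => 0) by apply: functional_extensionality => k; rewrite mxE.
exact: pfold0.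
Qed.

Lemma coord_tor x : torG K.+1 x -> coord x = 0.
Proof. by move=> h; apply: coord_uniq; [exact: torG_in h | rewrite P0 ginv1 gmulg1]. Qed.

Lemma coord_lcs1 x : L K.+1 x -> coord x = 0.
Proof. by move=> h; apply: coord_tor; apply: torG_lcs. Qed.

Lemma coord_eqT x y : L K y -> eqm (torG K.+1) x y -> coord x = coord y.
Proof.
move=> hy he.
have hxy : L K (x ** ginv y) by exact: torG_in he.
have -> : x = (x ** ginv y) ** y by gnorm.
by rewrite coordD // (coord_tor he) add0r.
Qed.

Lemma coord_P v : coord (Pz v) = v.
Proof. by apply: coord_uniq; [exact: P_lcs | rewrite gmulgV; exact: (sg1 (@torG_sub G K))]. Qed.

Lemma coord_g j : coord (g j) = delta_mx 0 j.
Proof.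
have := coord_P (delta_mx 0 j).
rewrite {1}/Pz (addprodz coord_add) //; last exact: g_lcs.
move=> <-; rewrite (bigD1 j) //= big1 ?addr0.
  by rewrite mxE !eqxx mulr1z.
by move=> l hl; rewrite mxE (negbTE hl) andbF mulr0z.
Qed.

Lemma coord_hom (f : G -> G) (fh : group_hom f) (M : 'M[int]_m) :
  induced_matrix f K.+1 g M -> forall x, L K x -> coord (f x) = coord x *m M.
Proof.
move=> hM x hx.
have TS := @torG_sub G K; have TN := @torG_norm G K.
have e1 : forall j, coord (f (g j)) = row j M.
  move=> j; apply: coord_uniq; first by apply: lcs_hom; last exact: g_lcs.
  have -> : Pz (row j M) = prodz g (fun k => M j k).
    by rewrite /Pz; congr prodz; apply: functional_extensionality => k; rewrite mxE.
  exact: hM.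
have he : eqm (torG K.+1) (f x) (f (Pz (coord x))).
  rewrite /eqm -(homV fh) -fh; apply: (torG_hom fh); exact: coordP.
rewrite (coord_eqT _ he); last by apply: lcs_hom; last exact: P_lcs.
rewrite /Pz (prodz_hom fh) (addprodz coord_add); last by move=> j; apply: lcs_hom; last exact: g_lcs.
rewrite mulmx_sum_row; apply: eq_bigr => j _.
by rewrite e1 -scaler_int intz.
Qed.

Lemma coord_iter (f : G -> G) (fh : group_hom f) (M : 'M[int]_m) :
  induced_matrix f K.+1 g M -> forall n x, L K x -> coord (iter n f x) = coord x *m (M ^+ n).
Proof.
move=> hM n x hx; elim: n => [|n IH]; first by rewrite expr0 mulmx1.
rewrite iterS (coord_hom fh hM); last exact: iter_lcs.
by rewrite IH exprSr -mulmxA mulmxE.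
Qed.

End Coord.

End GD.

Definition pb (u : nat -> int) := exists C : int, exists d : nat, forall n, u n <= C * (n.+1)%:Z ^+ d.

Lemma pow_ge1 (n d : nat) : 1 <= (n.+1)%:Z ^+ d :> int.
Proof. by apply: exprn_ege1; rewrite lez_nat. Qed.
Lemma pow_ge0 (n d : nat) : 0 <= (n.+1)%:Z ^+ d :> int.
Proof. exact: le_trans (pow_ge1 n d). Qed.

Lemma pb_norm u : pb u -> exists C : int, exists d : nat, 0 <= C /\ forall n, u n <= C * (n.+1)%:Z ^+ d.
Proof.
move=> [C [d h]]; exists `|C|, d; split => // n.
by apply: le_trans (h n) _; apply: ler_wpM2r; [exact: pow_ge0 | exact: ler_norm].
Qed.

Lemma pow_mono (n d e : nat) : (n.+1)%:Z ^+ d <= (n.+1)%:Z ^+ (d + e) :> int.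
Proof. by rewrite exprD -{1}[_ ^+ d]mulr1 ler_wpM2l ?pow_ge0 ?pow_ge1. Qed.

Lemma pb_le u v : (forall n, u n <= v n) -> pb v -> pb u.
Proof. by move=> h [C [d hv]]; exists C, d => n; apply: le_trans (hv n). Qed.

Lemma pb_add u v : pb u -> pb v -> pb (fun n => u n + v n).
Proof.
move=> /pb_norm [C1 [d1 [c1 h1]]] /pb_norm [C2 [d2 [c2 h2]]].
exists (C1 + C2), (d1 + d2)%N => n; rewrite mulrDl.
apply: lerD.
  by apply: le_trans (h1 n) _; apply: ler_wpM2l => //; apply: pow_mono.
by apply: le_trans (h2 n) _; apply: ler_wpM2l => //; rewrite addnC; apply: pow_mono.
Qed.

Lemma pb_const (c : int) : pb (fun _ => c).
Proof. by exists c, 0%N => n; rewrite expr0 mulr1. Qed.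

Lemma pb_sum (I : Type) (s : seq I) (u : I -> nat -> int) :
  (forall i, pb (u i)) -> pb (fun n => \sum_(i <- s) u i n).
Proof.
move=> h; elim: s => [|i s IH].
  by apply: pb_le (pb_const 0) => n; rewrite big_nil.
apply: pb_le (pb_add (h i) IH) => n; by rewrite big_cons.
Qed.

Lemma pb_mul u v : (forall n, 0 <= u n) -> (forall n, 0 <= v n) -> pb u -> pb v ->
  pb (fun n => u n * v n).
Proof.
move=> u0 v0 /pb_norm [C1 [d1 [c1 h1]]] /pb_norm [C2 [d2 [c2 h2]]].
exists (C1 * C2), (d1 + d2)%N => n.
rewrite exprD mulrACA; apply: ler_pM => //.
Qed.

Lemma pb_prod (I : Type) (s : seq I) (u : I -> nat -> int) :
  (forall i n, 0 <= u i n) -> (forall i, pb (u i)) -> pb (fun n => \prod_(i <- s) u i n).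
Proof.
move=> h0 h; elim: s => [|i s IH].
  by apply: pb_le (pb_const 1) => n; rewrite big_nil.
apply: pb_le (pb_mul (h0 i) _ (h i) IH) => n; first by rewrite big_cons.
by apply: prodr_ge0.
Qed.

Lemma pb_mulC (c : int) u : 0 <= c -> pb u -> pb (fun n => c * u n).
Proof.
move=> c0 [C [d h]]; exists (c * C), d => n.
by rewrite -mulrA; apply: ler_wpM2l.
Qed.

Definition nrm m (v : 'rV[int]_m) : int := \sum_k `|v 0 k|.
Definition mn m n (A : 'M[int]_(m, n)) : int := \sum_i nrm (row i A).

Lemma nrm_ge0 m (v : 'rV[int]_m) : 0 <= nrm v.
Proof. by apply: sumr_ge0 => k _. Qed.
Lemma mn_ge0 m n (A : 'M[int]_(m, n)) : 0 <= mn A.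
Proof. by apply: sumr_ge0 => k _; apply: nrm_ge0. Qed.

Lemma nrm0 m : nrm (0 : 'rV[int]_m) = 0.
Proof. by apply: big1 => k _; rewrite mxE normr0. Qed.
Lemma nrmN m (v : 'rV[int]_m) : nrm (- v) = nrm v.
Proof. by apply: eq_bigr => k _; rewrite mxE normrN. Qed.
Lemma nrmD m (u v : 'rV[int]_m) : nrm (u + v) <= nrm u + nrm v.
Proof.
rewrite /nrm -big_split /=; apply: ler_sum => k _; rewrite mxE; exact: ler_normD.
Qed.
Lemma nrm_sum m (I : Type) (s : seq I) (f : I -> 'rV[int]_m) :
  nrm (\sum_(i <- s) f i) <= \sum_(i <- s) nrm (f i).
Proof.
elim: s => [|i s IH]; first by rewrite !big_nil nrm0.
rewrite !big_cons; apply: le_trans (nrmD _ _) _; exact: lerD.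
Qed.
Lemma nrmZ m (c : int) (v : 'rV[int]_m) : nrm (c *: v) = `|c| * nrm v.
Proof. by rewrite /nrm mulr_sumr; apply: eq_bigr => k _; rewrite mxE normrM. Qed.
Lemma nrmMz m (c : int) (v : 'rV[int]_m) : nrm (v *~ c) = `|c| * nrm v.
Proof. by rewrite -scaler_int intz nrmZ. Qed.

Lemma nrm_row_le m n (A : 'M[int]_(m, n)) i : nrm (row i A) <= mn A.
Proof.
rewrite /mn (bigD1 i) //= lerDl; apply: sumr_ge0 => j _; exact: nrm_ge0.
Qed.

Lemma nrm_mulmx m n (v : 'rV[int]_m) (A : 'M[int]_(m, n)) : nrm (v *m A) <= nrm v * mn A.
Proof.
rewrite mulmx_sum_row; apply: le_trans (nrm_sum _ _) _.
rewrite [nrm v]/nrm mulr_suml; apply: ler_sum => i _; rewrite nrmZ.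
by apply: ler_wpM2l => //; apply: nrm_row_le.
Qed.

Lemma nrm_delta m (j : 'I_m) (A : 'M[int]_m) : 'e_j *m A = row j A.
Proof. by rewrite rowE. Qed.

Section GE.
Variable G : grp.
Local Notation "x ** y" := (gmul x y) (at level 40, left associativity).
Local Notation one := (gone G).
Local Notation L := (@lcs G).
Implicit Types x y z w : G.

Definition lc (l : seq G) := if l is x :: r then outer r x else one.

Lemma outer_hom (f : G -> G) (fh : group_hom f) r w : f (outer r w) = outer (map f r) (f w).
Proof. by elim: r w => [|z r IH] w //; rewrite map_cons !outer_cons IH (hom_comm fh). Qed.
Lemma lc_hom (f : G -> G) (fh : group_hom f) l : f (lc l) = lc (map f l).
Proof. by case: l => [|x r] /=; [exact: hom1 | exact: outer_hom]. Qed.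

Lemma lc_split y pre x post : lc (y :: pre ++ x :: post) = outer post (comm (outer pre y) x).
Proof. by rewrite /lc /outer foldl_cat. Qed.

Variables (phi : G -> G) (phi_hom : group_hom phi).
Variables (K m : nat) (g : 'I_m -> G) (hb : tf_basis K.+1 g).
Variables (m1 : nat) (g1 : 'I_m1 -> G) (hb1 : tf_basis 1 g1).
Variables (M1 : 'M[int]_m1) (hM1 : induced_matrix phi 1 g1 M1).
Hypothesis pbM1 : pb (fun n => mn (M1 ^+ n)).

Local Notation c := (coord hb).
Local Notation c1 := (coord hb1).
Definition F l := c (lc l).

Lemma slot pre post : (size pre + size post)%N = K ->
  additive_on (L 0) (fun x => F (pre ++ x :: post)) /\ forall u, L 1 u -> F (pre ++ u :: post) = 0.
Proof.
have TS := @torG_sub G K; have TN := @torG_norm G K.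
case: pre => [|y pre] /= hs; rewrite ?add0n in hs.
  rewrite /F /=; split; last first.
    move=> u hu; apply: coord_lcs1; have := outer_lcs1 (r:=post) (k:=0) hu; by rewrite add0n hs.
  split; first exact: (@lcs_sub G 0).
  move=> x x' _ _.
  have h1 := @outerO3' G post 0 x x' (lcs0 x) (lcs0 x'); rewrite add0n hs in h1.
  have hl : forall z, L K (outer post z) by move=> z; have := outer_lcs post (lcs0 z); rewrite add0n hs.
  rewrite (coord_eqT hb (lcsM (hl x) (hl x')) (torG_lcs h1)).
  by rewrite coordD.
set p := size pre.
have eK : (p.+1 + size post)%N = K by rewrite addSn.
have hw : L p (outer pre y) by have := outer_lcs pre (lcs0 y).
rewrite /F; split; last first.
  move=> u hu; rewrite lc_split; apply: coord_lcs1.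
  have := outer_lcs post (lcs_comm_G2 hw hu); by rewrite addSn eK.
split; first exact: (@lcs_sub G 0).
move=> x x' _ _; rewrite !lc_split.
set w := outer pre y.
have S := @lcs_sub G (p.+1 + size post).+1; have NN := @lcs_norm G (p.+1 + size post).+1.
have hc : forall z, L p.+1 (comm w z) by move=> z; exact: lcs_comm.
have e1 := outerO4 (r:=post) (hc (x ** x')) (lcsM (hc x) (hc x')) (comm_bil_r x x' hw).
have e2 := outerO3' (r:=post) (hc x) (hc x').
have e3 := eqm_trans S NN e1 e2; rewrite eK in e3.
have hl : forall z, L K (outer post (comm w z)).
  by move=> z; have := outer_lcs post (hc z); rewrite eK.
rewrite (coord_eqT hb (lcsM (hl x) (hl x')) (torG_lcs e3)).
by rewrite coordD.
Qed.

Lemma expand (S : G -> 'rV[int]_m) : additive_on (L 0) S -> (forall u, L 1 u -> S u = 0) ->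
  forall x, S x = \sum_l S (g1 l) *~ c1 x 0 l.
Proof.
move=> hA hv x.
set t := x ** ginv (Pz g1 (c1 x)).
have [_ [n [n0 hn]]] : torG 1 t := coordP hb1 (lcs0 x).
have St : S t = 0.
  have := hv _ hn; rewrite (addpow hA) // => e.
  apply/rowP => k; have := congr1 (fun v : 'rV[int]_m => v 0 k) e; rewrite /= mulmxnE !mxE.
  by move/eqP; rewrite mulrn_eq0 eqn0Ngt n0 /= => /eqP.
have ex : x = t ** Pz g1 (c1 x) by rewrite /t; gnorm.
have [_ SD] := hA.
by rewrite {1}ex SD // St add0r /Pz (addprodz hA).
Qed.

Definition Bd : int := \sum_(t : (K.+1).-tuple 'I_m1) nrm (F (map g1 t)).

Lemma Bd_ge0 : 0 <= Bd. Proof. by apply: sumr_ge0 => t _; exact: nrm_ge0. Qed.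

Lemma Fbound pre ks : (size pre + size ks)%N = K.+1 ->
  nrm (F (pre ++ map g1 ks)) <= Bd * \prod_(x <- pre) nrm (c1 x).
Proof.
elim/last_ind: pre ks => [|p x IH] ks hs.
  rewrite big_nil mulr1 /=; rewrite add0n in hs.
  have hs' : size ks == K.+1 by apply/eqP.
  have -> : ks = tval (Tuple hs') by [].
  rewrite /Bd (bigD1 (Tuple hs')) //= lerDl; apply: sumr_ge0 => t _; exact: nrm_ge0.
rewrite cat_rcons.
have hs1 : (size p + size (map g1 ks))%N = K by rewrite size_map; rewrite size_rcons in hs; lia.
have [hA hv] := slot hs1.
rewrite (expand hA hv x).
apply: le_trans (nrm_sum _ _) _.
rewrite big_rcons /=.
apply: le_trans (_ : \sum_l `|c1 x 0 l| * (Bd * \prod_(x0 <- p) nrm (c1 x0)) <= _).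
  apply: ler_sum => l _; rewrite nrmMz; apply: ler_wpM2l => //.
  have := IH (l :: ks); rewrite /= size_rcons in hs; apply; rewrite /=; lia.
rewrite -mulr_suml.
have -> : \sum_i `|c1 x 0 i| = nrm (c1 x) by [].
by rewrite mulrCA [nrm (c1 x) * _]mulrC.
Qed.

Definition good x := pb (fun n => nrm (c (iter n phi x))).

Lemma pb_c1 x : pb (fun n => nrm (c1 (iter n phi x))).
Proof.
apply: pb_le (pb_mulC (nrm_ge0 (c1 x)) pbM1) => n.
by rewrite (coord_iter hb1 phi_hom hM1 n (lcs0 x)); exact: nrm_mulmx.
Qed.

Lemma good_lc l : size l = K.+1 -> good (lc l).
Proof.
move=> hl.
apply: pb_le (pb_mulC Bd_ge0 (@pb_prod _ l (fun x n => nrm (c1 (iter n phi x))) (fun x n => nrm_ge0 _) pb_c1)) => n.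
rewrite (lc_hom (iter_hom phi_hom n)).
have := Fbound (pre := map (iter n phi) l) (ks := [::]); rewrite cats0 big_map; apply.
by rewrite size_map addn0.
Qed.

Lemma iter_eqm n k a b : eqm (L k) a b -> eqm (L k) (iter n phi a) (iter n phi b).
Proof.
rewrite /eqm => h; have := iter_lcs phi_hom n h.
by rewrite (iter_hom phi_hom) (homV (iter_hom phi_hom n)).
Qed.

Lemma good_eq a b : L K a -> L K b -> eqm (L K.+1) a b -> good b -> good a.
Proof.
move=> ha hb' he; apply: pb_le => n.
rewrite (coord_eqT hb (iter_lcs phi_hom n hb') (torG_lcs (iter_eqm n he))).
exact: lexx.
Qed.

Lemma good_mul a b : L K a -> L K b -> good a -> good b -> good (a ** b).
Proof.
move=> ha hb' ga gb; apply: pb_le (pb_add ga gb) => n.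
rewrite (iter_hom phi_hom) coordD; first exact: nrmD.
  exact: iter_lcs. exact: iter_lcs.
Qed.

Lemma good_lcs1 a : L K.+1 a -> good a.
Proof.
move=> h; apply: pb_le (pb_const 0) => n.
by rewrite coord_lcs1 ?nrm0 //; exact: iter_lcs.
Qed.

Lemma good_inv a b : L K a -> L K b -> eqm (L K.+1) (a ** b) one -> good b -> good a.
Proof.
move=> ha hb' he gb; apply: pb_le gb => n.
have h0 : c (iter n phi (a ** b)) = 0.
  have h1 := proj1 (eqm_in1 (@lcs_sub G K.+1) (@lcs_norm G K.+1) (a ** b)) he. apply: coord_lcs1; exact: (iter_lcs phi_hom n h1).
move: h0; rewrite (iter_hom phi_hom) coordD; try exact: iter_lcs.
by move/eqP; rewrite addr_eq0 => /eqP ->; rewrite nrmN.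
Qed.

Lemma claim k : (k <= K)%N -> forall w, L k w -> forall r, size r = (K - k)%N -> good (outer r w).
Proof.
elim: k => [|k IH] hk w hw.
  by move=> r hr; apply: (good_lc (l := w :: r)); rewrite /= hr subn0.
pose H w := L k.+1 w /\ forall r, size r = (K - k.+1)%N -> good (outer r w).
have eK : forall r : seq G, size r = (K - k.+1)%N -> (k.+1 + size r)%N = K by move=> r ->; lia.
have hl : forall (r : seq G) a, size r = (K - k.+1)%N -> L k.+1 a -> L K (outer r a).
  by move=> r a hr ha; have := outer_lcs r ha; rewrite eK.
suff : H w by case.
apply: (hw H).
  split.
  - split; first exact: lcs1.
    by move=> r hr; rewrite outer1; apply: good_lcs1; apply: lcs1.
  - move=> a b [ha ga] [hb' gb]; split; first exact: lcsM.
    move=> r hr; have e := outerO3' (r:=r) ha hb'; rewrite eK // in e.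
    apply: (good_eq _ (lcsM (hl _ _ hr ha) (hl _ _ hr hb')) e); first by apply: hl => //; exact: lcsM.
    by apply: good_mul; [apply: hl | apply: hl | apply: ga | apply: gb].
  - move=> a [ha ga]; split; first exact: lcsV.
    move=> r hr; have e := outerO3' (r:=r) (lcsV ha) ha; rewrite eK // gmulVg outer1 in e.
    apply: (good_inv (b := outer r a)); [apply: hl => //; exact: lcsV | exact: hl | | exact: ga].
    exact: (eqm_sym (@lcs_sub G K.+1) (@lcs_norm G K.+1) e).
move=> c0 [x [y [hx ->]]]; split; first exact: lcs_comm.
move=> r hr; rewrite -outer_cons; apply: IH => //; first lia.
by rewrite /= hr; lia.
Qed.

Lemma good_all w : L K w -> good w.
Proof. by move=> h; have := claim (leqnn K) h (r := [::]); rewrite subnn; apply. Qed.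

Lemma pb_M (M : 'M[int]_m) : induced_matrix phi K.+1 g M -> pb (fun n => mn (M ^+ n)).
Proof.
move=> hM; rewrite /mn.
apply: pb_sum => j; apply: pb_le (good_all (g_lcs hb j)) => n.
rewrite (coord_iter hb phi_hom hM n (g_lcs hb j)) (coord_g hb) -rowE.
exact: lexx.
Qed.

End GE.

Definition pbR (u : nat -> algC) :=
  exists Cb : algC, exists d : nat, 0 <= Cb /\ forall n, `|u n| <= Cb * (n.+1)%:R ^+ d.

Lemma pbR_ext (u v : nat -> algC) : pbR v -> (forall n, u n = v n) -> pbR u.
Proof. by move=> [Cb [d [C0 h]]] e; exists Cb, d; split => // n; rewrite e. Qed.

Lemma pbR_zero (u : nat -> algC) : (forall n, u n = 0) -> pbR u.
Proof. by move=> h; exists 0, 0%N; split => // n; rewrite h normr0 mul0r. Qed.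

Lemma natpow_mono (n d : nat) : ((n.+1)%:R ^+ d * (n.+2)%:R <= (n.+2)%:R ^+ d.+1 :> algC).
Proof.
rewrite -!natrX -natrM ler_nat expnSr leq_mul2r; apply/orP; right.
case: d => [|d]; first by [].
by rewrite leq_exp2r.
Qed.

Lemma pbR_step (a : algC) (u : nat -> algC) : `|a| <= 1 ->
  pbR (fun n => u n.+1 - a * u n) -> pbR u.
Proof.
move=> ha [Cb [d [C0 h]]].
exists (`|u 0%N| + Cb), d.+1; split; first by apply: addr_ge0.
elim=> [|n IH].
  by rewrite expr1n mulr1 lerDl.
have e : u n.+1 = a * u n + (u n.+1 - a * u n) by ring.
rewrite e; apply: le_trans (ler_normD _ _) _.
apply: le_trans (lerD (_ : `|a * u n| <= `|u n|) (h n)) _.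
  by rewrite normrM; apply: ler_piMl.
set D := `|u 0%N| + Cb.
have hD : Cb <= D by rewrite lerDr.
have x0 : 0 <= (n.+1)%:R ^+ d :> algC by apply: exprn_ge0; apply: ler0n.
apply: le_trans (lerD IH (ler_wpM2r x0 hD)) _.
rewrite -mulrDr; apply: ler_wpM2l; first by apply: addr_ge0.
apply: le_trans (natpow_mono n d).
by rewrite exprSr -[n.+2]addn1 natrD mulrDr mulr1.
Qed.

Lemma rec_shift (q : {poly algC}) (a : algC) (u : nat -> algC) N n :
  (size q <= N)%N ->
  \sum_(i < N.+1) (q * ('X - a%:P))`_i * u (n + i)%N =
  \sum_(i < N) q`_i * (u (n + i).+1 - a * u (n + i)%N).
Proof.
move=> hq.
rewrite mulrBr.
under eq_bigr do rewrite coefB coefMX coefMC mulrBl.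
rewrite sumrB big_ord_recl /= mul0r add0r big_ord_recr /=.
rewrite (nth_default 0 hq) mul0r mul0r addr0.
rewrite -sumrB; apply: eq_bigr => i _.
by rewrite /bump /= addnS; ring.
Qed.

Lemma rec_pb N : forall (p : {poly algC}) (u : nat -> algC), p != 0 -> (size p <= N)%N ->
  (forall z, root p z -> `|z| <= 1) ->
  (forall n, \sum_(i < N) p`_i * u (n + i)%N = 0) -> pbR u.
Proof.
elim: N => [|N IH] p u p0 hs hr hrec.
  by move: p0; rewrite -size_poly_eq0; move: hs; rewrite leqn0 => ->.
have [s1|s1] := eqVneq (size p) 1%N.
  apply: pbR_zero => n; have := hrec n.
  rewrite big_ord_recl big1 ?addr0 /= ?addn0.
    move/eqP; rewrite mulf_eq0 => /orP [|/eqP //].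
    have : lead_coef p != 0 by rewrite lead_coef_eq0.
    by rewrite lead_coefE s1 => /negbTE ->.
  by move=> i _; rewrite nth_default ?mul0r // s1.
have /closed_rootP [a ra] := s1.
have /factor_theorem [q eq] := ra.
have q0 : q != 0 by apply: contraNneq p0 => q0; rewrite eq q0 mul0r.
have sq : size p = (size q).+1 by rewrite eq size_Mmonic ?monicXsubC // size_XsubC addn2.
apply: (pbR_step (hr a ra)).
apply: (IH q) => //.
- by rewrite -ltnS -sq.
- by move=> z rz; apply: hr; rewrite eq rootM rz.
- move=> n; rewrite -rec_shift; last by rewrite -ltnS -sq.
  by rewrite -eq hrec.
Qed.

Lemma cmxM m (A B : 'M[int]_m) : cmx (A *m B) = cmx A *m cmx B.
Proof. by rewrite /cmx map_mxM. Qed.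
Lemma cmx1 m : cmx (1%:M : 'M[int]_m) = 1%:M.
Proof. by rewrite /cmx map_mx1. Qed.
Lemma cmxX m (A : 'M[int]_m) n : cmx (A ^+ n) = cmx A ^+ n.
Proof.
elim: n => [|n IH]; first by rewrite !expr0 cmx1.
by rewrite !exprSr -!mulmxE cmxM IH.
Qed.
Lemma cmxE m (A : 'M[int]_m) i j : cmx A i j = (A i j)%:~R.
Proof. by rewrite /cmx mxE. Qed.

Lemma hornerE_mx (R : comNzRingType) n (A : 'M[R]_n.+1) p :
  horner_mx A p = \sum_(i < size p) p`_i *: A ^+ i.
Proof.
rewrite -{1}[p]coefK poly_def raddf_sum; apply: eq_bigr => i _.
by rewrite /= horner_mxZ rmorphXn /= horner_mx_X.
Qed.

Lemma entry_le_mn m n (A : 'M[int]_(m, n)) i j : `|A i j| <= mn A.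
Proof.
apply: le_trans (nrm_row_le A i).
rewrite /nrm (bigD1 j) //= mxE lerDl; apply: sumr_ge0 => k _; exact: normr_ge0.
Qed.

Lemma pbR_pb (u : nat -> int) : pbR (fun n => (u n)%:~R) -> pb (fun n => `|u n|).
Proof.
move=> [Cb [d [C0 h]]]; exists (Num.Def.archi_bound Cb)%:Z, d => n.
rewrite -(ler_int algC) intr_norm rmorphM /= rmorphXn /=.
apply: le_trans (h n) _; apply: ler_wpM2r; first by apply: exprn_ge0; apply: ler0n.
exact: ltW (archi_boundP C0).
Qed.

Lemma eig_pb m (M : 'M[int]_m) : (forall a, eigenvalue (cmx M) a -> `|a| <= 1) ->
  pb (fun n => mn (M ^+ n)).
Proof.
case: m M => [|m'] M h.
  by apply: pb_le (pb_const 0) => n; rewrite /mn big_ord0.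
set A := cmx M; set p := char_poly A.
have ent : forall i k, pbR (fun n => (A ^+ n) i k).
  move=> i k; apply: (@rec_pb (size p) p) => //.
  - exact: monic_neq0 (char_poly_monic A).
  - by move=> z; rewrite -eigenvalue_root_char; apply: h.
  - move=> n; have e := congr1 (fun B : 'M[algC]_m'.+1 => (A ^+ n * B) i k) (Cayley_Hamilton A).
    rewrite /= mulr0 hornerE_mx mulr_sumr summxE mxE in e.
    apply: etrans e; apply: eq_bigr => j _; by rewrite -scalerAr -exprD mxE.
rewrite /mn; apply: pb_sum => i; rewrite /nrm; apply: pb_sum => k.
apply: pb_le (pbR_pb (u := fun n => (M ^+ n) i k) _) => [n|]; first by rewrite mxE.
by apply: (pbR_ext (ent i k)) => n; rewrite -cmxE cmxX.
Qed.

Lemma bernoulli (e : algC) t : 0 <= e -> 1 + t%:R * e <= (1 + e) ^+ t.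
Proof.
move=> e0; elim: t => [|t IH]; first by rewrite mul0r addr0 expr0.
have h1 : 0 <= 1 + e by apply: addr_ge0.
apply: le_trans (_ : (1 + t%:R * e) * (1 + e) <= _); last first.
  by rewrite exprSr; apply: ler_wpM2r.
rewrite -subr_ge0.
have -> : (1 + t%:R * e) * (1 + e) - (1 + t.+1%:R * e) = t%:R * (e * e).
  by rewrite -addn1 natrD; ring.
by apply: mulr_ge0; [apply: ler0n | apply: mulr_ge0].
Qed.

Lemma growth (r B : algC) d : 1 < r -> 0 <= B -> exists n, B * (n.+1)%:R ^+ d < r ^+ n.
Proof.
move=> r1 B0.
set e := r - 1.
have e0 : 0 < e by rewrite subr_gt0.
have er : r = 1 + e by rewrite /e; ring.
have ed0 : 0 < e ^+ d.+1 by apply: exprn_gt0.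
set X := B * (d.+2)%:R ^+ d / e ^+ d.+1.
have X0 : 0 <= X.
  apply: divr_ge0; last exact: ltW.
  by apply: mulr_ge0 => //; apply: exprn_ge0; apply: ler0n.
set t := Num.bound X.
have ht : X < t%:R := archi_boundP X0.
have t1 : (0 < t)%N by [].
exists (t * d.+1)%N.
have hA : (t * d.+1).+1%:R ^+ d <= ((d.+2 * t)%N)%:R ^+ d :> algC.
  apply: lerXn2r; rewrite ?nnegrE ?ler0n // ler_nat.
  by rewrite mulnC [in X in (_ < X)%N]mulSn addnC -addn1 leq_add2l.
apply: le_lt_trans (ler_wpM2l B0 hA) _.
have hB : B * ((d.+2 * t)%N)%:R ^+ d = X * e ^+ d.+1 * (t%:R ^+ d).
  by rewrite /X divfK ?expf_neq0 ?lt0r_neq0 // natrM exprMn mulrA.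
rewrite hB.
have tpos : 0 < t%:R ^+ d :> algC by apply: exprn_gt0; rewrite ltr0n.
apply: lt_le_trans (_ : t%:R * e ^+ d.+1 * t%:R ^+ d <= _).
  by rewrite ltr_pM2r // ltr_pM2r.
have -> : t%:R * e ^+ d.+1 * t%:R ^+ d = (t%:R * e) ^+ d.+1 :> algC.
  by rewrite exprMn [(t%:R) ^+ d.+1]exprSr; ring.
rewrite exprM er.
apply: lerXn2r; rewrite ?nnegrE.
- by apply: mulr_ge0; [apply: ler0n | apply: ltW].
- by apply: exprn_ge0; apply: addr_ge0 => //; apply: ltW.
- by apply: le_trans (bernoulli t (ltW e0)); rewrite lerDr.
Qed.

Lemma pb_eig m (M : 'M[int]_m) : pb (fun n => mn (M ^+ n)) ->
  forall a, eigenvalue (cmx M) a -> `|a| <= 1.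
Proof.
move=> hp a /eigenvalueP [v hv v0].
have [k vk] : exists k, v 0 k != 0.
  case: (pickP (fun k => v 0 k != 0)) => [k hk | hn]; first by exists k.
  by move/negP: v0; case; apply/eqP/rowP => k; have := hn k; rewrite mxE => /negbFE/eqP.
set A := cmx M.
have vn : forall n, v *m A ^+ n = a ^+ n *: v.
  elim=> [|n IH]; first by rewrite expr0 mulmx1 scale1r.
  by rewrite exprSr -mulmxE mulmxA IH -scalemxAl hv scalerA -exprSr.
have [Cb [d [C0 hC]]] := pb_norm hp.
set S := \sum_j `|v 0 j|.
have S0 : 0 <= S by apply: sumr_ge0 => j _; exact: normr_ge0.
have bnd : forall n, `|a| ^+ n * `|v 0 k| <= S * (Cb%:~R * (n.+1)%:R ^+ d).
  move=> n.
  have -> : `|a| ^+ n * `|v 0 k| = `|(v *m A ^+ n) 0 k| by rewrite vn mxE normrM normrX.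
  rewrite mxE; apply: le_trans (ler_norm_sum _ _ _) _.
  rewrite /S mulr_suml; apply: ler_sum => j _; rewrite normrM; apply: ler_wpM2l => //.
  rewrite /A -cmxX cmxE -intr_norm.
  have -> : Cb%:~R * (n.+1)%:R ^+ d = (Cb * (n.+1)%:Z ^+ d)%:~R :> algC.
    by rewrite rmorphM /= rmorphXn.
  rewrite ler_int; apply: le_trans (hC n); exact: entry_le_mn.
have vk0 : 0 < `|v 0 k| by rewrite normr_gt0.
rewrite real_leNgt ?normr_real ?real1 //; apply/negP => a1.
have B0 : 0 <= S * Cb%:~R / `|v 0 k|.
  by apply: divr_ge0; [apply: mulr_ge0 => //; rewrite ler0z | exact: ltW].
have [n hn] := growth d a1 B0.
have := bnd n.
rewrite -(ltr_pM2r vk0) in hn.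
have : S * (Cb%:~R * (n.+1)%:R ^+ d) = S * Cb%:~R / `|v 0 k| * (n.+1)%:R ^+ d * `|v 0 k|.
  by rewrite mulrAC divfK ?lt0r_neq0 // mulrA.
by move=> ->; rewrite (lt_geF hn).
Qed.

Section Fin.
Variable G : grp.
Local Notation "x ** y" := (gmul x y) (at level 40, left associativity).

Lemma exists_matrix (f : G -> G) (fh : group_hom f) K m (g : 'I_m -> G) (hb : tf_basis K.+1 g) :
  exists M : 'M[int]_m, induced_matrix f K.+1 g M.
Proof.
exists (\matrix_(j, k) coord hb (f (g j)) 0 k) => j.
have := coordP hb (lcs_hom fh (g_lcs hb j)).
by rewrite /Pz; congr (torG _ (_ ** ginv (prodz _ _))); apply: functional_extensionality => k; rewrite mxE.
Qed.

Lemma prod_id (f f' : G -> G) (fh : group_hom f) (fh' : group_hom f') (ff : cancel f f')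
  K m (g : 'I_m -> G) (hb : tf_basis K.+1 g) (M M' : 'M[int]_m) :
  induced_matrix f K.+1 g M -> induced_matrix f' K.+1 g M' -> M *m M' = 1%:M.
Proof.
move=> hM hM'; apply/row_matrixP => j.
rewrite !rowE mulmx1 mulmxA -(coord_g hb) -(coord_hom hb fh hM (g_lcs hb j)).
rewrite -(coord_hom hb fh' hM' (lcs_hom fh (g_lcs hb j))) ff.
by [].
Qed.
End Fin.

Lemma eig_inv m (A B : 'M[algC]_m) b : A *m B = 1%:M -> eigenvalue B b ->
  b != 0 /\ eigenvalue A b^-1.
Proof.
move=> hAB /eigenvalueP [v hv v0].
have hBA : B *m A = 1%:M by apply: mulmx1C.
have e : v = b *: (v *m A) by rewrite scalemxAl -hv -mulmxA hBA mulmx1.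
have b0 : b != 0 by apply: contraNneq v0 => b0; rewrite e b0 scale0r.
split => //; apply/eigenvalueP; exists v => //.
by rewrite {2}e scalerA mulVf // scale1r.
Qed.

Lemma cmx_id m (M M' : 'M[int]_m) : M *m M' = 1%:M -> cmx M *m cmx M' = 1%:M.
Proof. by move=> h; rewrite -cmxM h cmx1. Qed.

Unset Implicit Arguments.

Theorem lemma7p1 (G : grp) (phi : G -> G)
  (phi_hom : group_hom phi) (phi_bij : bijective phi)
  (fgG : finitely_generated G) (nilG : nilpotent G)
  (m1 : nat) (g1 : 'I_m1 -> G) (M1 : 'M[int]_m1)
  (b1 : tf_basis 1 g1) (hM1 : induced_matrix phi 1 g1 M1)
  (ev1 : forall a : algC, eigenvalue (cmx M1) a -> `|a| = 1) :
  forall (i : nat), (1 <= i)%N ->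
  forall (m : nat) (g : 'I_m -> G) (M : 'M[int]_m),
    tf_basis i g -> induced_matrix phi i g M ->
    forall a : algC, eigenvalue (cmx M) a -> `|a| = 1.
Proof.
case=> [//|K] _ m g M hb hM a ha.
have [psi ph hp] := phi_bij.
have psi_hom : group_hom psi.
  by move=> x y; rewrite -{1}(hp x) -{1}(hp y) -phi_hom ph.
have pbM1 : pb (fun n => mn (M1 ^+ n)) by apply: eig_pb => b hb'; rewrite ev1.
have a_le : `|a| <= 1 := pb_eig (pb_M phi_hom hb b1 hM1 pbM1 hM) ha.
have [M1' hM1'] := exists_matrix psi_hom b1.
have [M' hM'] := exists_matrix psi_hom hb.
have e1 := prod_id phi_hom psi_hom ph b1 hM1 hM1'.
have e2 := prod_id phi_hom psi_hom ph hb hM hM'.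
have pbM1' : pb (fun n => mn (M1' ^+ n)).
  apply: eig_pb => b hb'.
  have [b0 hinv] := eig_inv (cmx_id e1) hb'.
  have := ev1 _ hinv; rewrite normfV => /eqP; rewrite invr_eq1 => /eqP ->.
  exact: lexx.
have e2' : M' *m M = 1%:M by apply: mulmx1C.
have [a0 hinv] := eig_inv (cmx_id e2') ha.
have := pb_eig (pb_M psi_hom hb b1 hM1' pbM1' hM') hinv.
rewrite normfV invr_le1 ?unitfE ?normr_eq0 ?normr_ge0 ?normr_gt0 // => a_ge.
by apply: le_anti; rewrite a_le a_ge.
Qed.
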